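(* Let $n\ge 2$ and let $p, p', s \in B_{n}$, regarded as elements of $B_{n+1}$ via the standard inclusion. Then $$p' = s*p \quad \text{in } B_{n+1}$$ if and only if $$p'\, \delta_{n+1}^{-1} = s \cdot d(p)\, \sigma_1\, \delta_{n+1}^{-1} \cdot s^{-1} \quad \text{in } B_{n+1}.$$
   Context: $B_m$ denotes the braid group on $m$ strands with Artin generators $\sigma_1,\dots,\sigma_{m-1}$ and relations $\sigma_i\sigma_j\sigma_i=\sigma_j\sigma_i\sigma_j$ for $|i-j|=1$, $\sigma_i\sigma_j=\sigma_j\sigma_i$ for $|i-j|>1$; $B_\infty$ is the braid group on generators $\sigma_1,\sigma_2,\dots$ with the same relations, and $B_m\subset B_{m+1}\subset B_\infty$ via the generators. The shift $d$ is the monomorphism of $B_\infty$ induced by $\sigma_{i_1}^{\varepsilon_1}\cdots\sigma_{i_k}^{\varepsilon_k}\mapsto \sigma_{i_1+1}^{\varepsilon_1}\cdots\sigma_{i_k+1}^{\varepsilon_k}$. The shifted conjugacy operator is $a*b = a\cdot d(b)\cdot \sigma_1\cdot d(a^{-1})$ for $a,b\in B_\infty$. Also $\delta_{n+1} = \sigma_{n}\sigma_{n-1}\cdots\sigma_1 \in B_{n+1}$. *)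

(* Defs.v *)
From mathcomp Require Import all_boot.
Set Implicit Arguments. Unset Strict Implicit. Unset Printing Implicit Defensive.

(* A letter (i, true) is sigma_i, (i, false) is sigma_i^{-1}. *)
Definition letter := (nat * bool)%type.
Definition word := seq letter.

Definition sig (i : nat) : letter := (i, true).
Definition sig_inv (i : nat) : letter := (i, false).

Definition winv (w : word) : word := rev (map (fun l => (l.1, ~~ l.2)) w).

Definition shift (w : word) : word := map (fun l => (l.1.+1, l.2)) w.

(* equality in B_m : congruence generated by free cancellation and the
   braid relations among sigma_1, ..., sigma_{m-1} *)
Inductive beq (m : nat) : word -> word -> Prop :=
| beq_refl w : beq m w w
| beq_sym u v : beq m u v -> beq m v u
| beq_trans u v w : beq m u v -> beq m v w -> beq m u w
| beq_cat u1 u2 v1 v2 : beq m u1 u2 -> beq m v1 v2 -> beq m (u1 ++ v1) (u2 ++ v2)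
| beq_cancel i b : beq m [:: (i, b); (i, ~~ b)] [::]
| beq_braid i : 0 < i -> i.+1 < m ->
    beq m [:: sig i; sig i.+1; sig i] [:: sig i.+1; sig i; sig i.+1]
| beq_comm i j : 0 < i -> i.+1 < j -> j < m ->
    beq m [:: sig i; sig j] [:: sig j; sig i].

Definition in_B (n : nat) (w : word) : bool := all (fun l => 0 < l.1 < n) w.

Definition sconj (a b : word) : word :=
  a ++ shift b ++ [:: sig 1] ++ shift (winv a).

(* delta_{n+1} = sigma_n sigma_{n-1} ... sigma_1 *)
Definition delta (n1 : nat) : word := [seq sig i | i <- rev (iota 1 n1.-1)].

(* Main.v *)
Require Import Defs.
From mathcomp Require Import all_boot.
From mathcomp Require Import zify.

Lemma bcl m w u v : beq m u v -> beq m (w++u) (w++v).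
Proof. by move=> H; apply: beq_cat => //; apply: beq_refl. Qed.
Lemma bcr m w u v : beq m u v -> beq m (u++w) (v++w).
Proof. by move=> H; apply: beq_cat => //; apply: beq_refl. Qed.

Lemma winv_r m w : beq m (w ++ winv w) [::].
Proof.
elim: w => [|x w IH] /=; first exact: beq_refl.
rewrite /winv /= rev_cons -cats1 -/(winv w).
apply: (beq_trans (v := [:: x] ++ [::] ++ [:: (x.1, ~~ x.2)])).
  change (beq m ([:: x] ++ (w ++ winv w ++ [:: (x.1, ~~ x.2)])) ([:: x] ++ [::] ++ [:: (x.1, ~~ x.2)])).
  by apply: bcl; rewrite catA; apply: bcr.
case: x => i b /=; exact: beq_cancel.
Qed.

Lemma winv_l m w : beq m (winv w ++ w) [::].
Proof.
elim: w => [|x w IH] /=; first exact: beq_refl.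
rewrite /winv /= rev_cons -cats1 -/(winv w) -catA.
apply: (beq_trans (v := winv w ++ w)) => //.
apply: bcl.
change (beq m ([:: (x.1, ~~ x.2); x] ++ w) ([::] ++ w)); apply: bcr.
case: x => i b /=.
have := beq_cancel m i (~~ b); by rewrite negbK.
Qed.

Lemma comm_up m i l : 0 < i -> all (fun j => i.+1 < j < m) l ->
  beq m (sig i :: map sig l) (map sig l ++ [:: sig i]).
Proof.
move=> i0; elim: l => [|j l IH] /=; first by move=> _; apply: beq_refl.
case/andP => /andP [h1 h2] hl.
apply: (beq_trans (v := sig j :: sig i :: map sig l)).
  change (beq m ([:: sig i; sig j] ++ map sig l) ([:: sig j; sig i] ++ map sig l)).
  by apply: bcr; apply: beq_comm.
change (beq m ([:: sig j] ++ (sig i :: map sig l)) ([:: sig j] ++ (map sig l ++ [:: sig i]))).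
by apply: bcl; apply: IH.
Qed.

Lemma comm_down m i l : i < m -> all (fun j => (0 < j) && (j.+1 < i)) l ->
  beq m (sig i :: map sig l) (map sig l ++ [:: sig i]).
Proof.
move=> i0; elim: l => [|j l IH] /=; first by move=> _; apply: beq_refl.
case/andP => /andP [h1 h2] hl.
apply: (beq_trans (v := sig j :: sig i :: map sig l)).
  change (beq m ([:: sig i; sig j] ++ map sig l) ([:: sig j; sig i] ++ map sig l)).
  by apply: bcr; apply: beq_sym; apply: beq_comm.
change (beq m ([:: sig j] ++ (sig i :: map sig l)) ([:: sig j] ++ (map sig l ++ [:: sig i]))).
by apply: bcl; apply: IH.
Qed.

Lemma core n i : 0 < i -> i < n ->
  beq n.+1 (sig i :: delta n.+1) (delta n.+1 ++ [:: sig i.+1]).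
Proof.
move=> i0 lin.
rewrite /delta /=.
have -> : iota 1 n = iota 1 i.-1 ++ [:: i; i.+1] ++ iota i.+2 (n - i.+1).
  have -> : n = i.-1 + (2 + (n - i.+1)) by lia.
  rewrite iotaD iotaD /=; congr (_ ++ _ :: _ :: _); try lia.
  congr iota; lia.
rewrite !rev_cat !map_cat /=.
set A := map sig (rev (iota i.+2 (n - i.+1))).
set B := map sig (rev (iota 1 i.-1)).
have HA : beq n.+1 (sig i :: A) (A ++ [:: sig i]).
  apply: comm_up => //; rewrite all_rev; apply/allP => j; rewrite mem_iota => /andP[a b].
  apply/andP; split; lia.
have HB : beq n.+1 (sig i.+1 :: B) (B ++ [:: sig i.+1]).
  apply: comm_down => //; rewrite all_rev; apply/allP => j; rewrite mem_iota => /andP[a b].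
  apply/andP; split; lia.
rewrite -!catA.
apply: (beq_trans (v := (A ++ [:: sig i]) ++ [:: sig i.+1; sig i] ++ B)).
  change (beq n.+1 ((sig i :: A) ++ [:: sig i.+1; sig i] ++ B)
    ((A ++ [:: sig i]) ++ [:: sig i.+1; sig i] ++ B)).
  by apply: bcr.
rewrite -catA.
apply: (beq_trans (v := A ++ [:: sig i.+1; sig i] ++ (sig i.+1 :: B))).
  apply: bcl.
  change (beq n.+1 ([:: sig i; sig i.+1; sig i] ++ B) ([:: sig i.+1; sig i; sig i.+1] ++ B)).
  apply: bcr; apply: beq_braid => //; lia.
rewrite -?catA; apply: bcl.
change (beq n.+1 ([:: sig i.+1; sig i] ++ (sig i.+1 :: B)) ([:: sig i.+1; sig i] ++ (B ++ [:: sig i.+1]))).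
by apply: bcl.
Qed.

Lemma letter_comm n i b : 0 < i -> i < n ->
  beq n.+1 ((i, b) :: delta n.+1) (delta n.+1 ++ [:: (i.+1, b)]).
Proof.
move=> i0 lin; case: b; first exact: core.
set D := delta n.+1.
have H := @core n i i0 lin; rewrite -/D in H.
(* s^-1 D ~ s^-1 D s' s'^-1 ~ s^-1 s D s'^-1 ~ D s'^-1 *)
apply: (beq_trans (v := [:: (i, false)] ++ (D ++ [:: sig i.+1]) ++ [:: (i.+1, false)])).
  rewrite -catA. change ((i, false) :: D) with ([:: (i, false)] ++ D).
  apply: bcl. rewrite -[X in beq _ X _]cats0. apply: bcl. apply: beq_sym.
  exact: (beq_cancel _ i.+1 true).
apply: (beq_trans (v := [:: (i, false)] ++ (sig i :: D) ++ [:: (i.+1, false)])).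
  by apply: bcl; apply: bcr; apply: beq_sym.
rewrite catA.
apply: (beq_trans (v := [::] ++ D ++ [:: (i.+1, false)])); last exact: beq_refl.
change (beq n.+1 ([:: (i, false); sig i] ++ D ++ [:: (i.+1, false)]) ([::] ++ D ++ [:: (i.+1, false)])).
apply: bcr. exact: (beq_cancel _ i false).
Qed.

Lemma word_comm n w : in_B n w ->
  beq n.+1 (w ++ delta n.+1) (delta n.+1 ++ shift w).
Proof.
elim: w => [|[i b] w IH] /=; first by move=> _; rewrite cats0; apply: beq_refl.
case/andP => /andP [i0 lin] hw.
apply: (beq_trans (v := [:: (i, b)] ++ delta n.+1 ++ shift w)).
  change (beq n.+1 ([:: (i, b)] ++ (w ++ delta n.+1)) ([:: (i, b)] ++ (delta n.+1 ++ shift w))).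
  by apply: bcl; apply: IH.
rewrite catA.
apply: (beq_trans (v := (delta n.+1 ++ [:: (i.+1, b)]) ++ shift w)).
  by apply: bcr; apply: letter_comm.
rewrite -catA; exact: beq_refl.
Qed.

Lemma in_B_winv n w : in_B n w -> in_B n (winv w).
Proof. by rewrite /in_B /winv all_rev all_map. Qed.

Theorem proposition1 (n : nat) (p p' s : word) :
  2 <= n -> in_B n p -> in_B n p' -> in_B n s ->
  (beq n.+1 p' (sconj s p) <->
   beq n.+1 (p' ++ winv (delta n.+1))
            (s ++ shift p ++ [:: sig 1] ++ winv (delta n.+1) ++ winv s)).
Proof.
move=> n2 hp hp' hs.
set D := delta n.+1.
set Di := winv D.
have K : beq n.+1 (shift (winv s)) (Di ++ winv s ++ D).
  apply: (beq_trans (v := (Di ++ D) ++ shift (winv s))).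
    rewrite -[X in beq _ X _]cat0s; apply: bcr; apply: beq_sym; exact: winv_l.
  rewrite -catA; apply: bcl; apply: beq_sym; apply: word_comm; exact: in_B_winv.
set X := s ++ shift p ++ [:: sig 1] ++ Di.
have E : beq n.+1 (sconj s p) (X ++ winv s ++ D).
  rewrite /sconj /X -!catA; do 3! apply: bcl; exact: K.
have -> : s ++ shift p ++ [:: sig 1] ++ Di ++ winv s = X ++ winv s by rewrite /X -!catA.
set b := X ++ winv s.
have E' : beq n.+1 (sconj s p) (b ++ D) by rewrite /b -catA.
split => H.
- apply: (beq_trans (v := (b ++ D) ++ Di)).
    apply: bcr; exact: beq_trans H E'.
  rewrite -catA -[X in beq _ _ X]cats0; apply: bcl; exact: winv_r.
- apply: (beq_trans (v := (p' ++ Di) ++ D)).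
    rewrite -catA -[X in beq _ X _]cats0; apply: bcl; apply: beq_sym; exact: winv_l.
  apply: (beq_trans (v := b ++ D)); first by apply: bcr.
  exact: beq_sym.
Qed.
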